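(* Let $(c_n)_{n\ge 0}$ be the sequence defined in the context. Then $c_0=0$, $c_1=c_2=1$, $c_3=0$, and $$c_{8n-1}=c_{8n}=c_{8n+1}=c_{8n+2}=c_{2n-1}\quad\text{for all } n\ge 1,$$ $$c_{8n+3}=c_{8n+4}=c_{8n+5}=c_{8n+6}=0\quad\text{for all } n\ge 0.$$
   Context: For $n\in\mathbb{N}$ let $s_2(n)$ be the sum of the binary digits of $n$ and $t_n=s_2(n)\bmod 2$ (the Prouhet–Thue–Morse sequence). Let $F(X)=\sum_{n\ge1}t_nX^n\in\mathbb{F}_2[[X]]$ and let $G(X)=\sum_{n\ge1}c_nX^n\in\mathbb{F}_2[[X]]$ be its compositional inverse, i.e. $F(G(X))=G(F(X))=X$; set $c_0=0$. The $c_n$ are identified with integers in $\{0,1\}$. *)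

(* Defs.v *)
From mathcomp Require Import all_boot all_algebra.
Set Implicit Arguments. Unset Strict Implicit. Unset Printing Implicit Defensive.
Import GRing.Theory.
Local Open Scope ring_scope.

(* sum of binary digits of n: bit i of n is odd (n %/ 2^i); bits i > n vanish *)
Definition s2 (n : nat) : nat := (\sum_(i < n.+1) odd (n %/ 2 ^ i))%N.

Definition tm (n : nat) : 'F_2 := (odd (s2 n))%:R.

Definition series := nat -> 'F_2.

Definition Fser : series := fun n => if n is 0 then 0 else tm n.

Definition Xser : series := fun n => (n == 1)%:R.

Definition smul (a b : series) : series :=
  fun n => \sum_(i < n.+1) a i * b (n - i)%N.

Fixpoint spow (a : series) (k : nat) : series :=
  match k with
  | 0 => fun n => (n == 0)%:R
  | k.+1 => smul a (spow a k)
  end.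

(* composition f(g(X)), meaningful when g 0 = 0 (then [X^n] g^k = 0 for k > n) *)
Definition scomp (f g : series) : series :=
  fun n => \sum_(k < n.+1) f k * spow g k n.

(* Main.v *)
From HB Require Import structures.
From mathcomp Require Import all_boot all_algebra.
From mathcomp Require boolp.
From mathcomp Require Import ring zify.
Require Import Defs.
Set Implicit Arguments. Unset Strict Implicit. Unset Printing Implicit Defensive.
Import GRing.Theory.
Local Open Scope ring_scope.


Record ps := PS { coef : nat -> 'F_2 }.
HB.instance Definition _ := boolp.gen_eqMixin ps.
HB.instance Definition _ := boolp.gen_choiceMixin ps.

Lemma ps_ext (a b : ps) : coef a =1 coef b -> a = b.
Proof. case: a; case: b => f g /= H; congr PS; exact: boolp.funext. Qed.

Definition pzero := PS (fun _ => 0).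
Definition padd a b := PS (fun n => coef a n + coef b n).
Definition popp a := PS (fun n => - coef a n).
Definition pone := PS (fun n => (n == 0)%:R).
Definition pmul a b := PS (smul (coef a) (coef b)).

Lemma paddA : associative padd. Proof. by move=> a b c; apply: ps_ext => n /=; rewrite addrA. Qed.
Lemma paddC : commutative padd. Proof. by move=> a b; apply: ps_ext => n /=; rewrite addrC. Qed.
Lemma padd0 : left_id pzero padd. Proof. by move=> a; apply: ps_ext => n /=; rewrite add0r. Qed.
Lemma paddN : left_inverse pzero popp padd. Proof. by move=> a; apply: ps_ext => n /=; rewrite addNr. Qed.

HB.instance Definition _ := GRing.isZmodule.Build ps paddA paddC padd0 paddN.

Definition T (N : nat) (a : nat -> 'F_2) : {poly 'F_2} := \poly_(i < N.+1) a i.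

Lemma coefT N a i : (T N a)`_i = if (i <= N)%N then a i else 0.
Proof. by rewrite coef_poly ltnS. Qed.

Lemma smulT N a b n : (n <= N)%N -> smul a b n = (T N a * T N b)`_n.
Proof.
move=> nN; rewrite coefM /smul; apply: eq_bigr => i _.
rewrite !coefT (leq_trans (leq_ord i) nN) (leq_trans (leq_subr _ _) nN) //.
Qed.

Lemma smulE a b n : smul a b n = \sum_(i < n.+1) a i * b (n - i)%N.
Proof. by []. Qed.

Lemma pmulA : associative pmul.
Proof.
move=> a b c; apply: ps_ext => n /=.
transitivity ((T n (coef a) * (T n (coef b) * T n (coef c)))`_n).
  rewrite [LHS]smulE coefM; apply: eq_bigr => i _.
  by rewrite coefT -ltnS ltn_ord /= (smulT _ _ (leq_subr i n)).
rewrite mulrA [RHS]smulE coefM; apply: eq_bigr => i _.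
by rewrite coefT (leq_subr i n) (smulT _ _ (leq_ord i)).
Qed.

Lemma pmulC : commutative pmul.
Proof. by move=> a b; apply: ps_ext => n /=; rewrite !(smulT _ _ (leqnn n)) mulrC. Qed.

Lemma pmul1 : left_id pone pmul.
Proof.
move=> a; apply: ps_ext => n /=; rewrite /smul big_ord_recl /= subn0 mul1r big1 ?addr0 //.
by move=> i _; rewrite mul0r.
Qed.

Lemma pmulDl : left_distributive pmul padd.
Proof.
move=> a b c; apply: ps_ext => n /=; rewrite /smul -big_split /=.
by apply: eq_bigr => i _; rewrite mulrDl.
Qed.

Lemma pone_neq0 : pone != pzero.
Proof. by apply/eqP => /(congr1 (fun p => coef p 0)) /= /eqP; rewrite oner_eq0. Qed.

HB.instance Definition _ := GRing.Zmodule_isComNzRing.Build ps pmulA pmulC pmul1 pmulDl pone_neq0.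

Lemma pcoefD a b n : coef (a + b) n = coef a n + coef b n. Proof. by []. Qed.
Lemma pcoefM a b n : coef (a * b) n = smul (coef a) (coef b) n. Proof. by []. Qed.
Lemma pcoef1 n : coef 1 n = (n == 0)%:R. Proof. by []. Qed.
Lemma pcoef0 n : coef 0 n = 0. Proof. by []. Qed.



Lemma F2_add (x : 'F_2) : x + x = 0.
Proof. by case: x => -[|[|i]] //= Hi; apply: val_inj. Qed.
Lemma F2_sq (x : 'F_2) : x * x = x.
Proof. by case: x => -[|[|i]] //= Hi; apply: val_inj. Qed.

Definition pX := PS Xser.

Lemma coefpX (a : ps) n : coef (pX * a) n = if n is m.+1 then coef a m else 0.
Proof.
rewrite pcoefM smulE; case: n => [|m]; first by rewrite big_ord1 mul0r.
rewrite big_ord_recl big_ord_recl /= mul0r mul1r add0r big1 ?addr0.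
  by rewrite /bump /= subn1.
by move=> i _; rewrite /Xser /bump /= mul0r.
Qed.

Lemma ps2 : 1 + 1 = 0 :> ps.
Proof. by apply: ps_ext => n; rewrite pcoefD F2_add. Qed.

Lemma pair_sum n (f : nat -> 'F_2) :
  (forall i, (i <= n)%N -> f (n - i)%N = f i) ->
  \sum_(i < n.+1) f i = if odd n then 0 else f n./2.
Proof.
move=> fs.
have -> : \sum_(i < n.+1) f i = \sum_(i < n.+1 | (i < n - i)%N) f i
     + \sum_(i < n.+1 | (n - i < i)%N) f i + \sum_(i < n.+1 | (nat_of_ord i == n - i)%N) f i.
  rewrite (bigID (fun i : 'I_n.+1 => (i < n - i)%N)) /= -addrA; congr (_ + _).
  rewrite (bigID (fun i : 'I_n.+1 => (n - i < i)%N)) /=; congr (_ + _).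
    by apply: eq_bigl => i; case: (ltngtP i (n - i)).
  by apply: eq_bigl => i; case: (ltngtP i (n - i)).
have -> : \sum_(i < n.+1 | (n - i < i)%N) f i = \sum_(i < n.+1 | (i < n - i)%N) f i.
  rewrite (reindex_inj rev_ord_inj) /=; apply: eq_big => i.
    by rewrite subSS subKn // -ltnS ltn_ord.
  by move=> _; rewrite subSS fs // -ltnS ltn_ord.
rewrite F2_add add0r; case: (boolP (odd n)) => on.
  rewrite big1 // => i /eqP h; exfalso.
  have : n = (i + i)%N by rewrite {1}h subnK // -ltnS ltn_ord.
  by move=> e; move: on; rewrite e addnn odd_double.
have hn : (n./2 < n.+1)%N by rewrite ltnS; lia.
have e2 : n = (n./2 + n./2)%N by rewrite addnn -[LHS]odd_double_half (negbTE on).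
rewrite (bigD1 (Ordinal hn)) /=; last by rewrite {2}e2 addnK.
rewrite big1 ?addr0 //.
move=> i /andP [/eqP h2 h1]; exfalso; move/eqP: h1; apply; apply: val_inj => /=.
have : n = (i + i)%N by rewrite {1}h2 subnK // -ltnS ltn_ord.
lia.
Qed.

Lemma sqE (a : ps) n : coef (a * a) n = if odd n then 0 else coef a n./2.
Proof.
rewrite pcoefM smulE (@pair_sum n (fun i => coef a i * coef a (n - i)%N)).
  case: ifP => // on.
  have -> : (n - n./2 = n./2)%N by rewrite -{1}(odd_double_half n) on -addnn; lia.
  by rewrite F2_sq.
by move=> i hi /=; rewrite subKn // mulrC.
Qed.


Lemma sum_ext0 (F : nat -> 'F_2) m m' : (m <= m')%N ->
  (forall i, (m <= i)%N -> (i < m')%N -> F i = 0) ->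
  \sum_(i < m) F i = \sum_(i < m') F i.
Proof.
move=> le H; rewrite -(big_mkord (fun _ => true) F) -(big_mkord (fun _ => true) F) (@big_cat_nat _ _ _ m 0 m' _ _ (leq0n m) le) /=.
rewrite [X in _ = _ + X]big1_seq ?addr0 // => i /andP [_].
by rewrite mem_index_iota => /andP [h1 h2]; exact: H.
Qed.

Lemma powvan (r : {poly 'F_2}) k n : r`_0 = 0 -> (n < k)%N -> (r ^+ k)`_n = 0.
Proof.
move=> r0; elim: k n => [//|k IH] n nk.
rewrite exprS coefM big1 // => i _; case: (posnP i) => [->|ip]; first by rewrite r0 mul0r.
move: (ltn_ord i) => io; rewrite IH ?mulr0 //; lia.
Qed.

Lemma compC (p r : {poly 'F_2}) n : r`_0 = 0 ->
  (p \Po r)`_n = \sum_(k < n.+1) p`_k * (r ^+ k)`_n.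
Proof.
move=> r0; rewrite comp_polyE coef_sum.
under eq_bigr do rewrite coefZ.
transitivity (\sum_(k < size p + n.+1) p`_k * (r ^+ k)`_n).
  apply: (@sum_ext0 (fun k => p`_k * (r ^+ k)`_n)); first exact: leq_addr.
  by move=> i hi _; rewrite nth_default // mul0r.
symmetry; apply: (@sum_ext0 (fun k => p`_k * (r ^+ k)`_n)); first exact: leq_addl.
by move=> i hi _; rewrite powvan ?mulr0.
Qed.

Lemma spow_ps g k : spow g k = coef (PS g ^+ k).
Proof. by elim: k => [//|k IH]; rewrite exprS /= IH. Qed.

Lemma spowT N g k n : (n <= N)%N -> spow g k n = ((T N g) ^+ k)`_n.
Proof.
elim: k n => [|k IH] n nN; first by rewrite (expr0 (T N g)) coef1.
rewrite -[spow g k.+1 n]/(smul g (spow g k) n) smulE exprS coefM; apply: eq_bigr => i _.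
have iN : (i <= N)%N by apply: leq_trans nN; rewrite -ltnS ltn_ord.
by rewrite coefT iN IH //; apply: leq_trans nN; exact: leq_subr.
Qed.

Lemma scompT N a g n : g 0%N = 0 -> (n <= N)%N -> scomp a g n = (T N a \Po T N g)`_n.
Proof.
move=> g0 nN; rewrite compC; last by rewrite coefT leq0n.
apply: eq_bigr => k _.
have kN : (k <= N)%N by apply: leq_trans nN; rewrite -ltnS ltn_ord.
by rewrite coefT kN (@spowT N g k n nN).
Qed.

Definition cmp (g : nat -> 'F_2) (a : ps) := PS (scomp (coef a) g).

Lemma cmpD g a b : cmp g (a + b) = cmp g a + cmp g b.
Proof.
apply: ps_ext => n /=; rewrite /scomp -big_split; apply: eq_bigr => i _.
by rewrite mulrDl.
Qed.

Lemma cmpM g a b : g 0%N = 0 -> cmp g (a * b) = cmp g a * cmp g b.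
Proof.
move=> g0; apply: ps_ext => n /=; rewrite (@scompT n _ _ _ g0 (leqnn n)).
transitivity (((T n (coef a) \Po T n g) * (T n (coef b) \Po T n g))`_n).
  rewrite -comp_polyM !compC ?coefT ?leq0n //; apply: eq_bigr => k _.
  have kn : (k <= n)%N by rewrite -ltnS ltn_ord.
by rewrite coefT kn (smulT _ _ kn).
rewrite coefM smulE; apply: eq_bigr => i _.
have kn : (i <= n)%N by rewrite -ltnS ltn_ord.
by rewrite /= (@scompT n _ _ _ g0 kn) (@scompT n _ _ _ g0 (leq_subr i n)).
Qed.

Lemma cmp1 g : cmp g 1 = 1.
Proof.
apply: ps_ext => n /=; rewrite /scomp big_ord_recl big1 => [|i _].
  by rewrite addr0 mul1r.
by rewrite mul0r.
Qed.

Lemma cmp0 g : cmp g 0 = 0.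
Proof. by apply: ps_ext => n /=; rewrite /scomp big1 // => i _; rewrite mul0r. Qed.

Lemma cmpX g : g 0%N = 0 -> cmp g pX = PS g.
Proof.
move=> g0; apply: ps_ext => -[|m] /=; rewrite /scomp.
  by rewrite big_ord1 mul0r g0.
rewrite big_ord_recl big_ord_recl big1 => [|i _]; last by rewrite mul0r.
rewrite /= mul0r mul1r add0r addr0; change (coef (PS g * 1) m.+1 = g m.+1); by rewrite mulr1.
Qed.

Lemma cmpXn g a k : g 0%N = 0 -> cmp g (a ^+ k) = cmp g a ^+ k.
Proof.
move=> g0; elim: k => [|k IH]; first by rewrite !expr0 cmp1.
by rewrite !exprS cmpM // IH.
Qed.


Lemma sum_ext0N (F : nat -> nat) m m' : (m <= m')%N ->
  (forall i, (m <= i)%N -> (i < m')%N -> F i = 0%N) ->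
  (\sum_(i < m) F i = \sum_(i < m') F i)%N.
Proof.
move=> le H; rewrite -(big_mkord (fun _ => true) F) -(big_mkord (fun _ => true) F).
rewrite (@big_cat_nat _ _ _ m 0 m' _ _ (leq0n m) le) /=.
rewrite [X in _ = (_ + X)%N]big1_seq ?addn0 // => i /andP [_].
by rewrite mem_index_iota => /andP [h1 h2]; exact: H.
Qed.

Lemma s2_wide m K : (m <= K)%N -> s2 m = (\sum_(i < K) odd (m %/ 2 ^ i))%N.
Proof.
move=> mK.
have z : forall i, (m <= i)%N -> odd (m %/ 2 ^ i) = false.
  move=> i mi; rewrite divn_small //; apply: leq_trans (ltn_expl m (isT : 1 < 2)%N) _.
  exact: leq_pexp2l.
rewrite /s2; transitivity (\sum_(i < m.+1 + K) odd (m %/ 2 ^ i))%N.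
  apply: (@sum_ext0N (fun i => odd (m %/ 2 ^ i))); first exact: leq_addr.
  by move=> i hi _; rewrite z //; apply: ltnW.
symmetry; apply: (@sum_ext0N (fun i => odd (m %/ 2 ^ i))); first exact: leq_addl.
by move=> i hi _; rewrite z //; apply: leq_trans hi.
Qed.

Lemma s2_double m : s2 m.*2 = s2 m.
Proof.
rewrite {1}/s2 big_ord_recl expn0 divn1 odd_double add0n.
rewrite (s2_wide (K := m.*2)) ?leq_double_r //; last by rewrite -addnn leq_addr.
have e : (m.*2 %/ 2 = m)%N by rewrite -muln2 mulnK.
apply: eq_bigr => i _; by rewrite lift0 expnS divnMA e.
Qed.

Lemma s2_doubleS m : s2 (m.*2).+1 = (s2 m).+1.
Proof.
rewrite {1}/s2 big_ord_recl expn0 divn1 /= odd_double add1n.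
rewrite (s2_wide (K := (m.*2).+1)) //; last by rewrite -addnn; lia.
have e : ((m.*2).+1 %/ 2 = m)%N by rewrite divn2 -[(m.*2).+1]/(true + m.*2)%N half_bit_double.
congr (_.+1); apply: eq_bigr => i _; by rewrite /bump /= add1n expnS divnMA e.
Qed.

Lemma tm_double m : tm m.*2 = tm m.
Proof. by rewrite /tm s2_double. Qed.

Lemma tm_doubleS m : tm (m.*2).+1 = 1 + tm m.
Proof. by rewrite /tm s2_doubleS /=; case: (odd (s2 m)); rewrite /= ?mulr1n ?mulr0n ?F2_add ?addr0. Qed.

Lemma Fser_tm n : Fser n = tm n.
Proof. by case: n => [|n] //; rewrite /tm /s2 big_ord1. Qed.

Definition pF := PS Fser.
Definition pW := PS (fun n => (odd n)%:R).

Lemma pF_eq : pF = (1 + pX) * (pF * pF) + pW.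
Proof.
apply: ps_ext => n; rewrite mulrDl mul1r !pcoefD.
rewrite -[n](odd_double_half n); move: (n./2) => m; case: (odd n).
  rewrite -[(true + m.*2)%N]/((m.*2).+1) coefpX !sqE /= odd_double /= doubleK.
  by rewrite Fser_tm tm_doubleS add0r addrC.
rewrite -[(false + m.*2)%N]/(m.*2) coefpX !sqE odd_double /= doubleK.
case: m => [|k]; first by rewrite /= !add0r mulr0n.
rewrite doubleS /= odd_double /=.
rewrite -[smul Fser Fser _]/(coef (pF * pF) (k.*2).+1) sqE /= odd_double /= !addr0 -doubleS tm_double.
by [].
Qed.

Lemma pW_eq : (1 + pX * pX) * pW = pX.
Proof.
apply: ps_ext => n; rewrite mulrDl mul1r -mulrA pcoefD coefpX.
case: n => [|[|m]]; first by rewrite /= mulr0n addr0.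
  by rewrite coefpX /= addr0.
rewrite coefpX /= negbK.
by case: (odd m); rewrite /Xser /= ?mulr1n ?mulr0n ?F2_add ?addr0.
Qed.

Lemma Qgen (R : comRingType) (F X W : R) : 1 + 1 = 0 :> R -> F = (1+X)*(F*F)+W -> (1+X*X)*W = X ->
  (1 + X) ^+ 3 * (F * F) + (1 + X) ^+ 2 * F + X = 0.
Proof.
move=> h3 h1 h2.
have -> : (1 + X) ^+ 3 * (F * F) + (1 + X) ^+ 2 * F + X =
  (1+X)^+2*(F - ((1+X)*(F*F)+W)) + ((1+X*X)*W - X) + (1+1)*((1+X)^+3*(F*F) + X*W + X) by ring.
by rewrite -h1 h2 h3 !subrr mulr0 mul0r !addr0.
Qed.

Lemma Q_eq : (1 + pX) ^+ 3 * (pF * pF) + (1 + pX) ^+ 2 * pF + pX = 0.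
Proof. exact: (Qgen ps2 pF_eq pW_eq). Qed.

Lemma Ec_eq (c : nat -> 'F_2) : c 0%N = 0 -> scomp Fser c = Xser ->
  (1 + PS c) ^+ 3 * (pX * pX) + (1 + PS c) ^+ 2 * pX + PS c = 0.
Proof.
move=> c0 hc.
have hF : cmp c pF = pX by apply: ps_ext => n /=; rewrite hc.
have := congr1 (cmp c) Q_eq.
rewrite cmp0 !cmpD !cmpM // !cmpD cmp1 cmpX // hF => h; apply: etrans h; ring.
Qed.


Lemma Sgen (R : comRingType) (X u : R) : 1 + 1 = 0 :> R ->
  u = 1 + X ^+ 3 * (u * u * (u * u)) + X ^+ 4 * (u * u * (u * u)) ->
  (1 + X * u) * (1 + (1 + X) * u + X * (1 + X) * u ^+ 2 + X ^+ 2 * (1 + X) * u ^+ 3) = 0.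
Proof.
move=> h2 hR.
have -> : (1 + X * u) * (1 + (1 + X) * u + X * (1 + X) * u ^+ 2 + X ^+ 2 * (1 + X) * u ^+ 3) =
  (1 + 1) * (u + X * u + X * (1 + X) * u ^+ 2 + X ^+ 2 * (1 + X) * u ^+ 3)
  + ((1 + X ^+ 3 * (u * u * (u * u)) + X ^+ 4 * (u * u * (u * u))) - u) by ring.
by rewrite -hR h2 subrr mul0r addr0.
Qed.

Lemma EGgen (R : comRingType) (X u : R) : 1 + 1 = 0 :> R ->
  1 + (1 + X) * u + X * (1 + X) * u ^+ 2 + X ^+ 2 * (1 + X) * u ^+ 3 = 0 ->
  X * (X * (1 + X * ((1 + X) * (u * u))) ^+ 3) + X * (1 + X * ((1 + X) * (u * u))) ^+ 2
   + X * ((1 + X) * (u * u)) = 0.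
Proof.
move=> h2 hS.
have -> : X * (X * (1 + X * ((1 + X) * (u * u))) ^+ 3) + X * (1 + X * ((1 + X) * (u * u))) ^+ 2
   + X * ((1 + X) * (u * u)) =
   X * (1 + X) * (1 + (1 + X) * u + X * (1 + X) * u ^+ 2 + X ^+ 2 * (1 + X) * u ^+ 3) ^+ 2
   - (1 + 1) * (1%:R * X ^+ 1 * u ^+ 1 + 2%:R * X ^+ 2 * u ^+ 1 + 1%:R * X ^+ 2 * u ^+ 2 + 1%:R * X ^+ 2 * u ^+ 3 + 1%:R * X ^+ 3 * u ^+ 1 + 1%:R * X ^+ 3 * u ^+ 2 + 4%:R * X ^+ 3 * u ^+ 3 + 1%:R * X ^+ 3 * u ^+ 4 + 5%:R * X ^+ 4 * u ^+ 3 + 2%:R * X ^+ 4 * u ^+ 4 + 1%:R * X ^+ 4 * u ^+ 5 + 2%:R * X ^+ 5 * u ^+ 3 + 1%:R * X ^+ 5 * u ^+ 4 + 3%:R * X ^+ 5 * u ^+ 5 + 3%:R * X ^+ 6 * u ^+ 5 + 1%:R * X ^+ 7 * u ^+ 5) by ring.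
by rewrite hS h2 expr0n /= mulr0 mul0r subrr.
Qed.

Definition O4f (h : nat -> 'F_2) (j : nat) : 'F_2 := if (4 %| j)%N then h (j %/ 4)%N else 0.

Fixpoint Ofuel (f n : nat) : 'F_2 :=
  if f is f'.+1 then
    (n == 0)%:R + (if (3 <= n)%N then O4f (Ofuel f') (n - 3) else 0)
                + (if (4 <= n)%N then O4f (Ofuel f') (n - 4) else 0)
  else 0.

Lemma Ofuel_ok f1 f2 n : (n < f1)%N -> (n < f2)%N -> Ofuel f1 n = Ofuel f2 n.
Proof.
elim: f1 f2 n => [//|k IH] [//|l] n h1 h2 /=.
rewrite /O4f; congr (_ + _ + _).
  by case: ifP => // h3; case: ifP => // _; apply: IH; lia.
by case: ifP => // h3; case: ifP => // _; apply: IH; lia.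
Qed.

Definition Ov n := Ofuel n.+1 n.

Lemma Ov_eq n : Ov n = (n == 0)%:R + (if (3 <= n)%N then O4f Ov (n - 3) else 0)
                + (if (4 <= n)%N then O4f Ov (n - 4) else 0).
Proof.
rewrite {1}/Ov [Ofuel n.+1 n]/= /O4f /Ov; congr (_ + _ + _).
  by case: ifP => // h3; case: ifP => // _; apply: Ofuel_ok; lia.
by case: ifP => // h3; case: ifP => // _; apply: Ofuel_ok; lia.
Qed.

Lemma Ov0 : Ov 0 = 1. Proof. by rewrite Ov_eq /= !addr0. Qed.
Lemma Ov1 q : Ov (4 * q + 1) = 0.
Proof.
rewrite Ov_eq /O4f; have -> : (4 * q + 1 == 0)%N = false by lia.
case: ifP => h3; [case: ifP => h4; [exfalso; lia|] |]; (case: ifP => h5; [case: ifP => h6; [exfalso; lia|]|]);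
  by rewrite ?addr0.
Qed.
Lemma Ov2 q : Ov (4 * q + 2) = 0.
Proof.
rewrite Ov_eq /O4f; have -> : (4 * q + 2 == 0)%N = false by lia.
case: ifP => h3; [case: ifP => h4; [exfalso; lia|] |]; (case: ifP => h5; [case: ifP => h6; [exfalso; lia|]|]);
  by rewrite ?addr0.
Qed.

Lemma Ov3 q : Ov (4 * q + 3) = Ov q.
Proof.
rewrite Ov_eq /O4f; have -> : (4 * q + 3 == 0)%N = false by lia.
have -> : (3 <= 4 * q + 3)%N = true by lia.
have -> : (4 %| 4 * q + 3 - 3)%N = true by lia.
have -> : ((4 * q + 3 - 3) %/ 4 = q)%N by lia.
case: ifP => h5; [case: ifP => h6; [exfalso; lia|]|]; by rewrite add0r ?addr0.
Qed.

Lemma Ov4 q : Ov (4 * q + 4) = Ov q.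
Proof.
rewrite Ov_eq /O4f; have -> : (4 * q + 4 == 0)%N = false by lia.
have -> : (4 <= 4 * q + 4)%N = true by lia.
have -> : (4 %| 4 * q + 4 - 4)%N = true by lia.
have -> : ((4 * q + 4 - 4) %/ 4 = q)%N by lia.
have -> : (3 <= 4 * q + 4)%N = true by lia.
have -> : (4 %| 4 * q + 4 - 3)%N = false by lia.
by rewrite add0r add0r.
Qed.

Definition pO := PS Ov.

Lemma coefXn (a : ps) k n : coef (pX ^+ k * a) n = if (k <= n)%N then coef a (n - k) else 0.
Proof.
elim: k n => [|k IH] n; first by rewrite expr0 mul1r subn0.
rewrite exprS -mulrA coefpX; case: n => [//|n]; rewrite IH.
by rewrite ltnS subSS.
Qed.

Lemma coefO4 j : coef (pO * pO * (pO * pO)) j = O4f Ov j.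
Proof.
rewrite sqE sqE /O4f; case: ifP => h1.
  have -> : (4 %| j)%N = false by lia.
  by [].
case: ifP => h2.
  have -> : (4 %| j)%N = false by lia.
  by [].
have -> : (4 %| j)%N = true by lia.
by have -> : (j./2./2 = j %/ 4)%N by lia.
Qed.

Lemma pO_eq : pO = 1 + pX ^+ 3 * (pO * pO * (pO * pO)) + pX ^+ 4 * (pO * pO * (pO * pO)).
Proof.
apply: ps_ext => n; rewrite !pcoefD !coefXn !coefO4 [LHS]Ov_eq.
by case: (3 <= n)%N; case: (4 <= n)%N.
Qed.


Lemma cancel1 (a b : ps) : coef a 0 = 1 -> a * b = 0 -> b = 0.
Proof.
move=> a0 h; apply: ps_ext => n; elim/ltn_ind: n => n IH.
have := congr1 (fun p => coef p n) h; rewrite /= smulE big_ord_recl a0 mul1r subn0.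
rewrite big1 ?addr0 // => i _; rewrite lift0 IH ?pcoef0 ?mulr0 //; move: (ltn_ord i); lia.

Qed.

Definition agree m (a b : ps) := forall j, (j <= m)%N -> coef a j = coef b j.

Lemma agreeD m a b a' b' : agree m a a' -> agree m b b' -> agree m (a + b) (a' + b').
Proof. by move=> h1 h2 j jm; rewrite !pcoefD h1 ?h2. Qed.

Lemma agreeM m a b a' b' : agree m a a' -> agree m b b' -> agree m (a * b) (a' * b').
Proof.
move=> h1 h2 j jm; rewrite !pcoefM !smulE; apply: eq_bigr => i _.
have ij : (i <= j)%N by rewrite -ltnS ltn_ord.
rewrite h1 ?h2 //; [apply: leq_trans jm; exact: leq_subr | exact: leq_trans jm].
Qed.

Lemma agreeR m a : agree m a a. Proof. by []. Qed.

Lemma agreeXn m a b k : agree m a b -> agree m (a ^+ k) (b ^+ k).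
Proof.
move=> h; elim: k => [|k IH]; first by rewrite !expr0; exact: agreeR.
by rewrite !exprS; exact: agreeM.
Qed.

Lemma agreeX m a b : agree m a b -> agree m.+1 (pX * a) (pX * b).
Proof. by move=> h [|j] jm; rewrite !coefpX // h. Qed.

Lemma agreeW m a b : agree m.+1 a b -> agree m a b.
Proof. by move=> h j jm; apply: h; apply: leqW. Qed.

Definition Eexp (y : ps) := pX * (pX * (1 + y) ^+ 3) + pX * (1 + y) ^+ 2 + y.

Lemma uniqE c d : coef c 0 = coef d 0 -> Eexp c = 0 -> Eexp d = 0 -> c = d.
Proof.
move=> h0 hc hd.
suff H : forall n, agree n c d by apply: ps_ext => n; apply: (H n).
elim=> [|n IH]; first by case=> [|//] _.
have a1 : agree n (1 + c) (1 + d) by apply: agreeD => //; exact: agreeR.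
have a2 : agree n.+1 (pX * (1 + c) ^+ 2) (pX * (1 + d) ^+ 2) by apply: agreeX; exact: agreeXn.
have a3 : agree n.+1 (pX * (pX * (1 + c) ^+ 3)) (pX * (pX * (1 + d) ^+ 3)).
  by apply: agreeW; apply: agreeX; apply: agreeX; exact: agreeXn.
move=> j; rewrite leq_eqVlt => /orP [/eqP ->|]; last by rewrite ltnS; exact: IH.
have := congr1 (fun p => coef p n.+1) hc; have := congr1 (fun p => coef p n.+1) hd.
rewrite /Eexp !pcoefD a2 // a3 // => e1 e2; exact: (addrI _ (etrans e2 (esym e1))).
Qed.


Definition pG := pX * ((1 + pX) * (pO * pO)).

Lemma pG_E : Eexp pG = 0.
Proof.
have hS := Sgen ps2 pO_eq.
have hS' := cancel1 _ hS.
rewrite /Eexp /pG; apply: EGgen ps2 _; apply: hS'.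
by rewrite pcoefD coefpX /= addr0.
Qed.

Lemma c_is_G (c : nat -> 'F_2) : c 0%N = 0 -> scomp Fser c = Xser -> forall n, c n = coef pG n.
Proof.
move=> c0 hc.
have hC : Eexp (PS c) = 0 by rewrite /Eexp -(Ec_eq c0 hc); ring.
have e : PS c = pG by apply: uniqE hC pG_E; rewrite /pG coefpX.
by move=> n; rewrite -e.
Qed.

Lemma pG_odd j : coef pG (j.*2).+1 = Ov j.
Proof.
rewrite /pG coefpX mulrDl mul1r pcoefD coefpX sqE odd_double doubleK.
case: j => [|k]; first by rewrite [_.*2]/= addr0.
rewrite doubleS sqE [odd _]/= odd_double [~~ false]/=.
by rewrite addr0.
Qed.

Lemma pG_even j : coef pG (j.*2).+2 = Ov j.
Proof.
rewrite /pG coefpX mulrDl mul1r pcoefD coefpX !sqE [odd _.+1]/= odd_double [~~ false]/= doubleK.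
by rewrite add0r.
Qed.

Unset Implicit Arguments.
Theorem mainTheorem2 (c : nat -> 'F_2) :
  c 0%N = 0 ->
  scomp Fser c = Xser ->
  scomp c Fser = Xser ->
  [/\ c 0%N = 0, c 1%N = 1, c 2%N = 1 & c 3%N = 0] /\
      (forall n : nat, (1 <= n)%N ->
         [/\ c (8 * n - 1)%N = c (2 * n - 1)%N,
             c (8 * n)%N = c (2 * n - 1)%N,
             c (8 * n + 1)%N = c (2 * n - 1)%N &
             c (8 * n + 2)%N = c (2 * n - 1)%N]) /\
      (forall n : nat,
         [/\ c (8 * n + 3)%N = 0, c (8 * n + 4)%N = 0,
             c (8 * n + 5)%N = 0 & c (8 * n + 6)%N = 0]).
Proof.
move=> c0 hc _.
have H := c_is_G c0 hc.
have codd : forall j, c (j.*2).+1 = Ov j by move=> j; rewrite H pG_odd.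
have ceven : forall j, c (j.*2).+2 = Ov j by move=> j; rewrite H pG_even.
split; [|split].
- split => //.
  + by rewrite (codd 0%N) Ov0.
  + by rewrite (ceven 0%N) Ov0.
  + by rewrite (codd 1%N) (Ov1 0).
- case=> [//|q] _.
  have -> : (2 * q.+1 - 1 = (q.*2).+1)%N by lia.
  have -> : (8 * q.+1 - 1 = ((4 * q + 3).*2).+1)%N by lia.
  have -> : (8 * q.+1 + 1 = ((4 * q + 4).*2).+1)%N by lia.
  have -> : (8 * q.+1 + 2 = ((4 * q + 4).*2).+2)%N by lia.
  have -> : (8 * q.+1 = ((4 * q + 3).*2).+2)%N by lia.
  by rewrite !codd !ceven Ov3 Ov4.
- move=> n.
  have -> : (8 * n + 3 = ((4 * n + 1).*2).+1)%N by lia.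
  have -> : (8 * n + 4 = ((4 * n + 1).*2).+2)%N by lia.
  have -> : (8 * n + 5 = ((4 * n + 2).*2).+1)%N by lia.
  have -> : (8 * n + 6 = ((4 * n + 2).*2).+2)%N by lia.
  by rewrite !codd !ceven Ov1 Ov2.
Qed.
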